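(* Let $\mathcal{G}$ be a connected graph on which the SBCM is run, and suppose its node set can be partitioned into sets $I$ and $J$ such that (1) $J\subseteq\mathcal{P}$ (i.e., $J$ contains no zealots), and (2) there is a single node $i\in I$ such that every path from any node $j\in J$ to a zealot traverses $i$. Then at any steady state $\mathbf{x}$ of the SBCM, $x_j=x_i$ for all $j\in J$.
   Context: Let $\mathcal{G}$ be a finite undirected unweighted graph without self-loops, with node set $\mathcal{N}$, adjacency $i\sim j$, partitioned into zealots $\mathcal{Z}$ and persuadable nodes $\mathcal{P}=\mathcal{N}\setminus\mathcal{Z}$. For $\gamma,\delta\ge0$, $w(x_i,x_j)=\frac{1}{1+e^{\gamma(x_i-x_j)^2-\gamma\delta}}$ if $i\sim j$ and $0$ otherwise. The SBCM is $\frac{dx_i}{dt}=f_i(\mathbf{x})=\frac{\sum_j w(x_i,x_j)(x_j-x_i)}{\sum_j w(x_i,x_j)}$ for $i\in\mathcal{P}$ and $\frac{dx_i}{dt}=0$ for $i\in\mathcal{Z}$. A steady state is $\mathbf{x}$ with $f_i(\mathbf{x})=0$ for all $i$. *)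

(* Defs.v *)
From mathcomp Require Import all_boot all_order all_algebra.
From mathcomp Require Import reals.
From mathcomp Require Import sequences exp.
Set Implicit Arguments. Unset Strict Implicit. Unset Printing Implicit Defensive.
Import Order.TTheory GRing.Theory Num.Theory.
Local Open Scope ring_scope.

Definition simple_graph (T : finType) (e : rel T) : Prop :=
  symmetric e /\ irreflexive e.

Definition connected_graph (T : finType) (e : rel T) : Prop :=
  forall u v : T, connect e u v.

Definition sbcm_w (R : realType) (T : finType) (e : rel T) (gamma delta : R)
    (x : T -> R) (i j : T) : R :=
  if e i j then 1 / (1 + expR (gamma * (x i - x j) ^+ 2 - gamma * delta)) else 0.

(* Right-hand side f_i of the SBCM; zealots (nodes in Z) have derivative 0. *)
Definition sbcm_f (R : realType) (T : finType) (e : rel T) (Z : {set T})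
    (gamma delta : R) (x : T -> R) (i : T) : R :=
  if i \in Z then 0
  else (\sum_j sbcm_w e gamma delta x i j * (x j - x i))
       / (\sum_j sbcm_w e gamma delta x i j).

Definition sbcm_steady_state (R : realType) (T : finType) (e : rel T)
    (Z : {set T}) (gamma delta : R) (x : T -> R) : Prop :=
  forall i : T, sbcm_f e Z gamma delta x i = 0.

(* Main.v *)
Require Import Defs.
From mathcomp Require Import all_boot all_order all_algebra.
From mathcomp Require Import reals.
From mathcomp Require Import sequences exp.
Import Order.TTheory GRing.Theory Num.Theory.
Local Open Scope ring_scope.
Lemma maxp (R : realType) (T : finType) (e : rel T) (C : {set T}) (i : T)
  (w : T -> T -> R) (y : T -> R) :
  symmetric e -> connected_graph e -> i \notin C ->
  (forall c d, c \in C -> e c d -> d != i -> d \in C) ->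
  (forall c d, e c d -> 0 < w c d) -> (forall c d, ~~ e c d -> w c d = 0) ->
  (forall c, c \in C -> \sum_d w c d * (y d - y c) = 0) ->
  forall c, c \in C -> y c <= y i.
Proof.
move=> sym conn iC clC wpos w0 eq c0 c0C.
rewrite leNgt; apply/negP => ltc0.
case: (arg_maxP y c0C) => cm cmC cmax.
set m := y cm.
have lt_im : y i < m by apply: lt_le_trans ltc0 (cmax _ c0C).
pose Mx := [set c in C | y c == m].
have clM : forall c d, e c d -> c \in Mx -> d \in Mx.
  move=> c d ecd; rewrite inE => /andP[cC /eqP yc].
  have le_d : forall d', 0 <= w c d' * (m - y d').
    move=> d'; case: (boolP (e c d')) => ed'; last by rewrite w0 // mul0r.
    apply: mulr_ge0; first exact: ltW (wpos _ _ ed').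
    rewrite subr_ge0; case: (eqVneq d' i) => [->|ni]; first exact: ltW.
    exact: cmax (clC _ _ cC ed' ni).
  have s0 : \sum_d' w c d' * (m - y d') = 0.
    have := eq c cC; rewrite yc => H.
    rewrite -[LHS]opprK -sumrN.
    under eq_bigr => d' _ do rewrite -mulrN opprB.
    by rewrite H oppr0.
  have := psumr_eq0P (fun d' _ => le_d d') s0 (i:=d) isT.
  move/eqP; rewrite mulf_eq0 (gt_eqF (wpos _ _ ecd)) /= subr_eq0 => /eqP ydm.
  have dni : d != i by apply/eqP => di; move: lt_im; rewrite -di ydm ltxx.
  by rewrite inE (clC _ _ cC ecd dni) /= ydm.
have := closed_connect (intro_closed (sym_connect_sym sym) clM) (conn cm i).
rewrite !inE (negbTE iC) eqxx andbT; have cmC2 : cm \in C by []. by rewrite cmC2.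
Qed.

Lemma path_noti (T : finType) (e : rel T) (i u : T) (p : seq T) :
  path [rel a b | e a b && (b != i)] u p -> i \notin p.
Proof.
elim: p u => //= d p IH u /andP[/andP[_ di] pp].
by rewrite inE negb_or eq_sym di (IH d pp).
Qed.

Theorem theorem4 (R : realType) (T : finType) (e : rel T) (Z : {set T})
    (gamma delta : R) (I J : {set T}) (i : T) (x : T -> R) :
  simple_graph e ->
  connected_graph e ->
  0 <= gamma -> 0 <= delta ->
  I :&: J = set0 -> I :|: J = setT ->
  J \subset ~: Z ->
  i \in I ->
  (forall (j : T) (p : seq T),
      j \in J -> path e j p -> last j p \in Z -> i \in j :: p) ->
  sbcm_steady_state e Z gamma delta x ->
  forall j, j \in J -> x j = x i.
Proof.
move=> [sym irr] conn _ _ IJ0 _ _ iI hpath st.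
have Jni : forall j, j \in J -> j != i.
  move=> j jJ; apply/eqP => ji; move: IJ0 => /setP/(_ j).
  by rewrite !inE jJ ji iI.
pose e' := [rel a b | e a b && (b != i)].
pose C := [set c | (c != i) && [exists j, (j \in J) && connect e' j c]].
have iC : i \notin C by rewrite inE eqxx.
have clC : forall c d, c \in C -> e c d -> d != i -> d \in C.
  move=> c d; rewrite !inE => /andP[_ /existsP[j /andP[jJ cjc]]] ecd di.
  rewrite di /=; apply/existsP; exists j; rewrite jJ /=.
  by apply: connect_trans cjc (connect1 _); rewrite /= ecd di.
pose w := sbcm_w e gamma delta x.
have wpos : forall c d, e c d -> 0 < w c d.
  move=> c d ecd; rewrite /w /sbcm_w ecd div1r invr_gt0.
  by apply: addr_gt0; [exact: ltr01 | exact: expR_gt0].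
have w0 : forall c d, ~~ e c d -> w c d = 0.
  by move=> c d necd; rewrite /w /sbcm_w (negbTE necd).
have CnZ : forall c, c \in C -> c \notin Z.
  move=> c; rewrite inE => /andP[_ /existsP[j /andP[jJ /connectP[p pp ->]]]].
  apply/negP => lZ.
  have pe : path e j p by apply: sub_path pp => a b /andP[].
  have := hpath j p jJ pe lZ; rewrite inE (negbTE (@path_noti _ e i j p pp)) orbF.
  by rewrite eq_sym (negbTE (Jni _ jJ)).
have eqs : forall c, c \in C -> \sum_d w c d * (x d - x c) = 0.
  move=> c cC; have := st c; rewrite /sbcm_f (negbTE (CnZ _ cC)).
  move/eqP; rewrite mulf_eq0 invr_eq0 => /orP[/eqP //|/eqP den0].
  have cni : c != i by move: cC; rewrite inE => /andP[].
  have := conn c i; case/connectP => [[|d p]] /=.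
    by move=> _ ci; move: cni; rewrite ci eqxx.
  case/andP => ecd _ _.
  have wnn : forall d', true -> 0 <= w c d'.
    by move=> d' _; case: (boolP (e c d')) => h; [exact: ltW (wpos _ _ h) | rewrite w0].
  have H := psumr_eq0P (P := fun _ => true) (F := fun d => w c d) wnn den0 (i := d) isT.
  by move: (wpos _ _ ecd); rewrite /= H ltxx.
move=> j jJ.
have jC : j \in C.
  by rewrite inE Jni //=; apply/existsP; exists j; rewrite jJ connect0.
apply/eqP; rewrite eq_le; apply/andP; split.
  exact: (@maxp _ _ e C i w x sym conn iC clC wpos w0 eqs j jC).
have eqsN : forall c, c \in C -> \sum_d w c d * ((fun t => - x t) d - (fun t => - x t) c) = 0.
  move=> c cC.
  have -> : \sum_d w c d * ((fun t => - x t) d - (fun t => - x t) c)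
            = - \sum_d w c d * (x d - x c).
    rewrite -sumrN; apply: eq_bigr => d _ /=; rewrite -mulrN; congr (_ * _).
    by rewrite opprK opprB addrC.
  by rewrite eqs // oppr0.
have := @maxp _ _ e C i w (fun t => - x t) sym conn iC clC wpos w0 eqsN j jC.
by rewrite lerN2.
Qed.
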